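(* Let $N\geq1$ and let $|\psi_N\rangle=\sum_{k=1}^{D}|x_k\rangle^{\otimes N}\in\mathrm{Sym}_N$ with $|x_k\rangle\in\mathbb{C}^2$, where $D=D(\psi_N)$ is the optimal bond dimension of $|\psi_N\rangle$, and assume $D(\psi_N)\leq\lfloor N/2\rfloor+1$. Then the $(N+1)$-qubit state $|\psi_{N+1}\rangle=\sum_{k=1}^{D}|x_k\rangle^{\otimes(N+1)}$ is nonzero and has optimal bond dimension $D(\psi_{N+1})=D(\psi_N)$.
   Context: The one-qubit space is $\mathbb{C}^2$ with standard basis $\{|0\rangle,|1\rangle\}$. For $N\geq1$, $\mathrm{Sym}_N\subset(\mathbb{C}^2)^{\otimes N}$ denotes the symmetric subspace, i.e. the vectors invariant under every permutation of the $N$ tensor factors; it has dimension $N+1$. For a nonzero $|\psi\rangle\in\mathrm{Sym}_N$, the optimal bond dimension $D(\psi)$ is the minimal integer $D\geq1$ such that $|\psi\rangle=\sum_{k=1}^D|x_k\rangle^{\otimes N}$ for some (not necessarily normalized) vectors $|x_k\rangle\in\mathbb{C}^2$. *)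

(* Defs.v *)
(* Scalars: any numClosedFieldType F (the complex numbers are one). *)
From HB Require Import structures.
From mathcomp Require Import all_boot all_order all_algebra all_fingroup.
Set Implicit Arguments. Unset Strict Implicit. Unset Printing Implicit Defensive.
Import GRing.Theory Num.Theory.
Local Open Scope ring_scope.

(* (F^2)^{(x) N}: coefficient functions on basis strings s : 'I_N -> 'I_2. *)
Definition tensor (F : Type) (N : nat) := {ffun {ffun 'I_N -> 'I_2} -> F}.

Notation qubit F := 'cV[F]_2.

Definition tpow (F : numClosedFieldType) (x : qubit F) (N : nat) : tensor F N :=
  [ffun s : {ffun 'I_N -> 'I_2} => \prod_(i < N) x (s i) ord0].

Definition tsum (F : numClosedFieldType) (D : nat) (xs : 'I_D -> qubit F) (N : nat)
  : tensor F N := \sum_(k < D) tpow (xs k) N.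

Definition tperm_act (F : Type) (N : nat) (sigma : 'S_N) (t : tensor F N) : tensor F N :=
  [ffun s : {ffun 'I_N -> 'I_2} => t [ffun i => s (sigma i)]].

Definition in_Sym (F : Type) (N : nat) (t : tensor F N) : Prop :=
  forall sigma : 'S_N, tperm_act sigma t = t.

Definition has_decomp (F : numClosedFieldType) (N : nat) (psi : tensor F N) (D : nat)
  : Prop := exists xs : 'I_D -> qubit F, psi = tsum xs N.

Definition optimal_bond_dim (F : numClosedFieldType) (N : nat) (psi : tensor F N) (D : nat)
  : Prop :=
  (1 <= D)%N /\ has_decomp psi D /\
  forall D', (1 <= D')%N -> has_decomp psi D' -> (D <= D')%N.

(* Main.v *)
Require Import Defs.
From HB Require Import structures.
From mathcomp Require Import all_boot all_order all_algebra all_fingroup.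
From mathcomp Require Import ring zify.
From Stdlib Require Import Lia.
Set Implicit Arguments. Unset Strict Implicit. Unset Printing Implicit Defensive.
Import GRing.Theory Num.Theory.
Local Open Scope ring_scope.

Section Aux.
Variable F : numClosedFieldType.

Definition q0 (x : qubit F) := x ord0 ord0.
Definition q1 (x : qubit F) := x ord_max ord0.
Definition cross (z y : qubit F) := q1 z * q0 y - q0 z * q1 y.

Definition consf n (b : 'I_2) (s : {ffun 'I_n -> 'I_2}) : {ffun 'I_n.+1 -> 'I_2} :=
  [ffun i => if unlift ord0 i is Some j then s j else b].

Definition contr n (a b : F) (t : tensor F n.+1) : tensor F n :=
  [ffun s => a * t (consf ord0 s) + b * t (consf ord_max s)].

Definition wsum D (c : 'I_D -> F) (xs : 'I_D -> qubit F) n : tensor F n :=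
  [ffun s => \sum_(k < D) c k * tpow (xs k) n s].

Lemma prodS (x : qubit F) n s b :
  \prod_(i < n.+1) x (consf b s i) ord0 = x b ord0 * \prod_(i < n) x (s i) ord0.
Proof.
rewrite big_ord_recl /consf ffunE unlift_none; congr (_ * _).
by apply: eq_bigr => i _; rewrite ffunE liftK.
Qed.

Lemma tpowS (x : qubit F) n s b : tpow x n.+1 (consf b s) = x b ord0 * tpow x n s.
Proof. by rewrite !ffunE prodS. Qed.

Lemma contr_wsum D (c : 'I_D -> F) xs n a b :
  contr a b (wsum c xs n.+1) =
  wsum (fun k => c k * (a * q0 (xs k) + b * q1 (xs k))) xs n.
Proof.
apply/ffunP => s; rewrite /wsum !ffunE !mulr_sumr -big_split /=.
apply: eq_bigr => k _; rewrite !ffunE !prodS /q0 /q1.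
ring.
Qed.


Lemma qubit_eq0 (x : qubit F) : q0 x = 0 -> q1 x = 0 -> x = 0.
Proof.
move=> h0 h1; apply/matrixP => i j; rewrite (ord1 j) mxE.
case: i => [[|[|i]] Hi] //.
- by rewrite -h0 /q0; congr (x _ _); apply: val_inj.
- by rewrite -h1 /q1; congr (x _ _); apply: val_inj.
Qed.

Lemma tpow_ex (x : qubit F) n : x != 0 -> exists s, tpow x n s != 0.
Proof.
move=> nx.
have [b hb] : exists b, x b ord0 != 0.
  case: (eqVneq (q0 x) 0) => h0; last by exists ord0.
  case: (eqVneq (q1 x) 0) => h1; last by exists ord_max.
  by rewrite (qubit_eq0 h0 h1) eqxx in nx.
exists [ffun _ => b]; rewrite ffunE.
rewrite (eq_bigr (fun _ => x b ord0)); last by move=> i _; rewrite ffunE.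
by rewrite prodr_const card_ord expf_neq0.
Qed.

Lemma wsum_single D (c : 'I_D -> F) zs n k0 :
  (forall k, k != k0 -> c k = 0) -> zs k0 != 0 -> wsum c zs n = 0 -> c k0 = 0.
Proof.
move=> hc nz h; have [s hs] := tpow_ex n nz.
have := congr1 (fun f : {ffun {ffun 'I_n -> 'I_2} -> F} => f s) h; rewrite /wsum !ffunE (bigD1 k0) //= big1 ?addr0.
  by move/eqP; rewrite mulf_eq0 (negbTE hs) orbF => /eqP.
by move=> k hk; rewrite hc ?mul0r.
Qed.

Lemma contr0 n (a b : F) : contr a b (0 : tensor F n.+1) = 0.
Proof. by apply/ffunP => s; rewrite !ffunE !mulr0 addr0. Qed.

Lemma wsum_recl D (c : 'I_D.+1 -> F) zs n :
  c ord0 = 0 -> wsum c zs n = wsum (fun j => c (lift ord0 j)) (fun j => zs (lift ord0 j)) n.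
Proof.
move=> h; apply/ffunP => s; rewrite !ffunE big_ord_recl h mul0r add0r.
by apply: eq_bigr => i _.
Qed.

Lemma indep m : forall n (zs : 'I_m.+1 -> qubit F) c, (m <= n)%N ->
  (forall k, zs k != 0) -> (forall k k', k != k' -> cross (zs k) (zs k') != 0) ->
  wsum c zs n = 0 -> forall k, c k = 0.
Proof.
elim: m => [|m IH] n zs c hmn nz np h.
  move=> k; rewrite (ord1 k); apply: (wsum_single (zs := zs) (n := n)) => //.
  by move=> k'; rewrite (ord1 k') eqxx.
case: n hmn h => [//|n] hmn h.
set z := zs ord0.
have h' := congr1 (contr (q1 z) (- q0 z)) h.
rewrite contr0 contr_wsum wsum_recl in h'; last first.
  by rewrite /z; apply/eqP; rewrite mulf_eq0; apply/orP; right; apply/eqP; ring.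
have np' : forall k k' : 'I_m.+1, k != k' ->
    cross (zs (lift ord0 k)) (zs (lift ord0 k')) != 0.
  by move=> k k' hk; apply: np; rewrite (inj_eq (@lift_inj _ ord0)).
have hI := IH n _ _ hmn (fun k => nz _) np' h'.
have hl : forall j, c (lift ord0 j) = 0.
  move=> j; have /eqP := hI j; rewrite mulf_eq0 => /orP [/eqP //|/eqP hh].
  have := np ord0 (lift ord0 j) (neq_lift _ _); rewrite /cross -/z.
  suff -> : q1 z * q0 (zs (lift ord0 j)) - q0 z * q1 (zs (lift ord0 j)) = 0 by rewrite eqxx.
  by rewrite -hh; ring.
move=> k; case: (unliftP ord0 k) => [j ->|->]; first exact: hl.
apply: (wsum_single (zs := zs) (n := n.+1)) => // k'.
by case: (unliftP ord0 k') => [j' -> _|-> ]; [exact: hl | rewrite eqxx].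
Qed.


Lemma wsum_ext D (c c' : 'I_D -> F) xs n : (forall k, c k = c' k) -> wsum c xs n = wsum c' xs n.
Proof. by move=> h; apply/ffunP => s; rewrite !ffunE; apply: eq_bigr => k _; rewrite h. Qed.

Definition ynz (w y : qubit F) := if y == 0 then w else y.

Lemma iter_contr n D xs w p : forall (c : 'I_D -> F) (d : 'I_p -> F) ys,
  wsum c xs (n + p) = wsum d ys (n + p) ->
  wsum (fun k => c k * \prod_(j < p) cross (ynz w (ys j)) (xs k)) xs n = 0.
Proof.
elim: p => [|p IH] c d ys.
  rewrite addn0 => h; rewrite (@wsum_ext _ _ c) ?h; last by move=> k; rewrite big_ord0 mulr1.
  by apply/ffunP => s; rewrite !ffunE big_ord0.
rewrite addnS => h.
set z := ynz w (ys ord0).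
have h' := congr1 (contr (q1 z) (- q0 z)) h.
rewrite !contr_wsum [RHS]wsum_recl in h'; last first.
  apply/eqP; rewrite mulf_eq0; apply/orP; right; apply/eqP.
  rewrite /z /ynz; case: eqP => [->|_]; first by rewrite /q0 /q1 !mxE; ring.
  ring.
rewrite -[RHS](IH _ _ _ h').
apply: wsum_ext => k; rewrite big_ord_recl /cross -/z; ring.
Qed.


Lemma tpow0 N : (0 < N)%N -> tpow (0 : qubit F) N = 0.
Proof.
by case: N => // N _; apply/ffunP => s; rewrite !ffunE big_ord_recl mxE mul0r.
Qed.

Lemma tpowZ (a : F) (x : qubit F) N s : tpow (a *: x) N s = a ^+ N * tpow x N s.
Proof.
rewrite !ffunE (eq_bigr (fun i => a * x (s i) ord0)); last by move=> i _; rewrite mxE.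
by rewrite big_split /= prodr_const card_ord.
Qed.

Lemma reduce N D (xs : 'I_D -> qubit F) k0 : (0 < N)%N -> xs k0 = 0 -> tsum xs N <> 0 ->
  exists D', [/\ (1 <= D')%N, (D' < D)%N & has_decomp (tsum xs N) D'].
Proof.
case: D xs k0 => [|D] xs k0; first by case: k0.
move=> hN h0 hne.
have e : tsum xs N = tsum (fun j => xs (lift k0 j)) N.
  rewrite /tsum (bigD1_ord k0) //= h0 tpow0 // add0r.
  by apply: eq_bigr.
case: D xs k0 h0 hne e => [|D] xs k0 h0 hne e.
  by exfalso; apply: hne; rewrite e /tsum big_ord0.
by exists D.+1; split => //; exists (fun j => xs (lift k0 j)).
Qed.

Lemma prop_ex (x x' : qubit F) : x != 0 -> cross x x' = 0 -> exists c, x' = c *: x.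
Proof.
move=> nz hc.
have e : forall c, q0 x' = c * q0 x -> q1 x' = c * q1 x -> x' = c *: x.
  move=> c h0 h1; apply/matrixP => i j; rewrite (ord1 j) mxE.
  case: i => [[|[|i]] Hi] //.
  - by rewrite /q0 in h0; rewrite (_ : Ordinal Hi = ord0) ?h0 //; apply: val_inj.
  - by rewrite /q1 in h1; rewrite (_ : Ordinal Hi = ord_max) ?h1 //; apply: val_inj.
move: hc; rewrite /cross => hc.
case: (eqVneq (q0 x) 0) => h0.
  case: (eqVneq (q1 x) 0) => h1; first by rewrite (qubit_eq0 h0 h1) eqxx in nz.
  exists (q1 x' / q1 x); apply: e; last by rewrite divfK.
  have hc' : q0 x * q1 x' = q1 x * q0 x' by apply/eqP; rewrite -subr_eq0; apply/eqP; rewrite -oppr0 -hc; ring.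
  by rewrite mulrAC [q1 x' * _]mulrC hc' mulrAC divff // mul1r.
exists (q0 x' / q0 x); apply: e; first by rewrite divfK.
have hc' : q1 x * q0 x' = q0 x * q1 x' by apply/eqP; rewrite -subr_eq0; apply/eqP; rewrite -hc.
by rewrite mulrAC [q0 x' * _]mulrC hc' mulrAC divff // mul1r.
Qed.


Lemma opt_nz N D (xs : 'I_D -> qubit F) : (0 < N)%N -> tsum xs N <> 0 ->
  (forall D', (1 <= D')%N -> has_decomp (tsum xs N) D' -> (D <= D')%N) ->
  forall k, xs k != 0.
Proof.
move=> hN hne hopt k; apply/negP => /eqP h.
have [D' [h1 h2 h3]] := reduce hN h hne.
by have := hopt D' h1 h3; rewrite leqNgt h2.
Qed.

Lemma opt_np N D (xs : 'I_D -> qubit F) : (0 < N)%N -> tsum xs N <> 0 ->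
  (forall D', (1 <= D')%N -> has_decomp (tsum xs N) D' -> (D <= D')%N) ->
  forall k k', k != k' -> cross (xs k) (xs k') != 0.
Proof.
move=> hN hne hopt k k' hkk'; apply/negP => /eqP hc.
have nz := opt_nz hN hne hopt.
have [c hc'] := prop_ex (nz k) hc.
set r := N.-root (1 + c ^+ N).
set ys := fun i => if i == k then r *: xs k else if i == k' then 0 else xs i.
have e : tsum ys N = tsum xs N.
  apply/ffunP => s; rewrite /tsum !sum_ffunE.
  rewrite [LHS](bigD1 k) // [RHS](bigD1 k) //=.
  rewrite [X in _ + X = _](bigD1 k') 1?eq_sym //= [X in _ = _ + X](bigD1 k') 1?eq_sym //=.
  have -> : \sum_(i < D | (i != k) && (i != k')) tpow (ys i) N s =
            \sum_(i < D | (i != k) && (i != k')) tpow (xs i) N s.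
    by apply: eq_bigr => i /andP [i1 i2]; rewrite /ys (negbTE i1) (negbTE i2).
  rewrite /ys eqxx eq_sym (negbTE hkk') eqxx tpow0 // hc' !tpowZ rootCK // ffunE.
  rewrite ffunE; ring.
have hy : ys k' = 0 by rewrite /ys eq_sym (negbTE hkk') eqxx.
have hne' : tsum ys N <> 0 by rewrite e.
have [D' [h1 h2 h3]] := reduce hN hy hne'.
by rewrite e in h3; have := hopt D' h1 h3; rewrite leqNgt h2.
Qed.


Lemma cross3 (y a b : qubit F) : y != 0 -> cross y a = 0 -> cross y b = 0 -> cross a b = 0.
Proof.
move=> nz ha hb.
have e1 : q1 y * cross a b = q1 a * cross y b - q1 b * cross y a by rewrite /cross; ring.
have e0 : q0 y * cross a b = q0 a * cross y b - q0 b * cross y a by rewrite /cross; ring.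
rewrite ha hb !mulr0 subr0 in e1 e0.
case: (eqVneq (q0 y) 0) => h0.
  case: (eqVneq (q1 y) 0) => h1; first by rewrite (qubit_eq0 h0 h1) eqxx in nz.
  by move/eqP: e1; rewrite mulf_eq0 (negbTE h1) => /eqP.
by move/eqP: e0; rewrite mulf_eq0 (negbTE h0) => /eqP.
Qed.

Lemma wsum1 D (xs : 'I_D -> qubit F) n : wsum (fun _ => 1) xs n = tsum xs n.
Proof.
by apply/ffunP => s; rewrite /tsum ffunE sum_ffunE; apply: eq_bigr => k _; rewrite mul1r.
Qed.

End Aux.

Unset Implicit Arguments.

Theorem theorem2 (F : numClosedFieldType) (N D : nat) (xs : 'I_D -> qubit F) :
  (1 <= N)%N ->
  in_Sym (tsum xs N) ->
  tsum xs N <> 0 ->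
  optimal_bond_dim (tsum xs N) D ->
  (D <= N./2 + 1)%N ->
  tsum xs N.+1 <> 0 /\ optimal_bond_dim (tsum xs N.+1) D.
Proof.
move=> hN _ hne [hD [_ hopt]] hDN.
have nz := opt_nz hN hne hopt.
have np := opt_np hN hne hopt.
have hhalf : (N./2 + N./2 <= N)%N.
  by rewrite addnn -{2}(odd_double_half N) leq_addl.
case: D xs hne hD hopt hDN nz np => [//|D0] xs hne _ hopt hDN nz np.
split.
  move=> h0; rewrite -wsum1 in h0.
  have := @indep F D0 N.+1 xs _ ltac:(lia) nz np h0 ord0.
  by move/eqP; rewrite oner_eq0.
split => //; split; first by exists xs.
move=> D' hD' [ys hys].
rewrite leqNgt; apply/negP => hlt.
set n := (N.+1 - D')%N.
have e : N.+1 = (n + D')%N by rewrite /n; lia.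
rewrite -!wsum1 e in hys.
have h := iter_contr (xs ord0) hys.
have hall := @indep F D0 n xs _ ltac:(rewrite /n; lia) nz np h.
pose P k j := cross (ynz (xs ord0) (ys j)) (xs k) == 0.
have hex : forall k, exists j, P k j.
  move=> k; have /eqP := hall k; rewrite mul1r => /prodf_eq0 [j _ hj].
  by exists j.
pose f k := odflt (Ordinal hD') [pick j | P k j].
have hf : forall k, P k (f k).
  move=> k; rewrite /f; case: pickP => [j //|hn].
  by have [j hj] := hex k; rewrite hn in hj.
have : (D0.+1 <= D')%N.
  rewrite -[D0.+1]card_ord -[D' in (_ <= D')%N]card_ord.
  apply: (@leq_card _ _ f) => k k' ekk.
  apply/eqP; apply: contraT => hk.
  have := np k k' hk; rewrite (@cross3 _ (ynz (xs ord0) (ys (f k)))) ?eqxx //.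
  - by rewrite /ynz; case: ifP => [_|/negbT //]; exact: nz.
  - by apply/eqP; apply: hf.
  - by rewrite ekk; apply/eqP; apply: hf.
by rewrite leqNgt hlt.
Qed.
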